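(* If $A$ is a three-dimensional periodic Costas array, then $A$ has order $4$.
   Context: For $n\in\mathbb{N}$, $[n]=\{1,\dots,n\}$. A three-dimensional permutation array is a binary array $A:[n_1]\times[n_2]\times[n_3]\to\{0,1\}$ (all $n_i\ge2$) for which there is either a bijection $\varphi:[n_1]\times[n_2]\to[n_3]$ with $A(a_1,a_2,a_3)=1$ iff $\varphi(a_1,a_2)=a_3$, or a bijection $\varphi:[n_1]\to[n_2]\times[n_3]$ with $A(a_1,a_2,a_3)=1$ iff $\varphi(a_1)=(a_2,a_3)$; points with value 1 are dots and the order is the number of dots. The difference vector from dot $(a_1,a_2,a_3)$ to a distinct dot $(w_1,w_2,w_3)$ is $\langle w_1-a_1,w_2-a_2,w_3-a_3\rangle\in\mathbb{Z}^3$. A three-dimensional Costas array is a permutation array in which no two distinct ordered pairs of distinct dots have the same difference vector. The periodic extension $\mathbb{A}:\mathbb{Z}^3\to\{0,1\}$ is $\mathbb{A}(a_1,a_2,a_3)=A(a_1',a_2',a_3')$ with $a_i'\in[n_i]$, $a_i'\equiv a_i\pmod{n_i}$. A Costas array is periodic Costas if for every box $W=\prod_{i=1}^3\{k_i,\dots,k_i+n_i-1\}$ ($k_i\in\mathbb{Z}$), no two distinct ordered pairs of distinct points of $W$ where $\mathbb{A}=1$ have the same difference vector. *)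

(* Defs.v *)
(* Coordinates [n] = {1..n} are represented 0-based by 'I_n
   (a uniform shift, irrelevant for difference vectors and periodicity). *)
From HB Require Import structures.
From mathcomp Require Import all_boot all_algebra.
Set Implicit Arguments. Unset Strict Implicit. Unset Printing Implicit Defensive.
Import GRing.Theory Num.Theory.
Local Open Scope ring_scope.

Definition arr3 (n1 n2 n3 : nat) := 'I_n1 -> 'I_n2 -> 'I_n3 -> bool.

Definition pt3 := (int * int * int)%type.

Definition is_perm_array3 n1 n2 n3 (A : arr3 n1 n2 n3) : Prop :=
  (exists phi : 'I_n1 * 'I_n2 -> 'I_n3,
      bijective phi /\ forall a1 a2 a3, A a1 a2 a3 = (phi (a1, a2) == a3))
  \/ (exists phi : 'I_n1 -> 'I_n2 * 'I_n3,
      bijective phi /\ forall a1 a2 a3, A a1 a2 a3 = (phi a1 == (a2, a3))).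

Definition is_dot n1 n2 n3 (A : arr3 n1 n2 n3) (p : 'I_n1 * 'I_n2 * 'I_n3) : bool :=
  A p.1.1 p.1.2 p.2.

Definition order3 n1 n2 n3 (A : arr3 n1 n2 n3) : nat :=
  #|[set p : 'I_n1 * 'I_n2 * 'I_n3 | is_dot A p]|.

Definition emb3 n1 n2 n3 (p : 'I_n1 * 'I_n2 * 'I_n3) : pt3 :=
  ((p.1.1 : nat)%:Z, (p.1.2 : nat)%:Z, (p.2 : nat)%:Z).

Definition diff3 (a w : pt3) : pt3 :=
  (w.1.1 - a.1.1, w.1.2 - a.1.2, w.2 - a.2).

Definition is_costas3 n1 n2 n3 (A : arr3 n1 n2 n3) : Prop :=
  is_perm_array3 A /\
  forall p q p' q' : 'I_n1 * 'I_n2 * 'I_n3,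
    is_dot A p -> is_dot A q -> is_dot A p' -> is_dot A q' ->
    p <> q -> p' <> q' ->
    diff3 (emb3 p) (emb3 q) = diff3 (emb3 p') (emb3 q') ->
    (p, q) = (p', q').

Definition per_ext n1 n2 n3 (A : arr3 n1 n2 n3) (x : pt3) : bool :=
  [exists a : 'I_n1 * 'I_n2 * 'I_n3,
    [&& ((a.1.1 : nat)%:Z == x.1.1 %[mod (n1 : nat)%:Z])%Z,
        ((a.1.2 : nat)%:Z == x.1.2 %[mod (n2 : nat)%:Z])%Z,
        ((a.2 : nat)%:Z == x.2 %[mod (n3 : nat)%:Z])%Z & is_dot A a]].

Definition in_box (n1 n2 n3 : nat) (k x : pt3) : bool :=
  [&& k.1.1 <= x.1.1 <= k.1.1 + (n1 : nat)%:Z - 1,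
      k.1.2 <= x.1.2 <= k.1.2 + (n2 : nat)%:Z - 1 &
      k.2 <= x.2 <= k.2 + (n3 : nat)%:Z - 1].

Definition is_periodic_costas3 n1 n2 n3 (A : arr3 n1 n2 n3) : Prop :=
  is_costas3 A /\
  forall (k : pt3) (x y x' y' : pt3),
    in_box n1 n2 n3 k x -> in_box n1 n2 n3 k y ->
    in_box n1 n2 n3 k x' -> in_box n1 n2 n3 k y' ->
    per_ext A x -> per_ext A y -> per_ext A x' -> per_ext A y' ->
    x <> y -> x' <> y' ->
    diff3 x y = diff3 x' y' ->
    (x, y) = (x', y').

(* Main.v *)
Require Import Defs.
From mathcomp Require Import all_boot all_algebra.
From mathcomp Require Import zify.
Import GRing.Theory Num.Theory.
Local Open Scope ring_scope.
Set Implicit Arguments. Unset Strict Implicit. Unset Printing Implicit Defensive.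
Definition cg (m : nat) (a b : int) : Prop := (a == b %[mod (m:nat)%:Z])%Z.
Lemma cgP m a b : cg m a b <-> exists k : int, a = b + k * (m:nat)%:Z.
Proof.
rewrite /cg eqz_mod_dvd; split.
  by move/dvdzP=> [k hk]; exists k; rewrite -hk addrC subrK.
by move=> [k ->]; apply/dvdzP; exists k; rewrite addrC addKr.
Qed.
Definition inwin (m : nat) (k X : int) := k <= X <= k + (m:nat)%:Z - 1.

Lemma lift1 (m : nat) (x y x' y' : int) : (0 < m)%N -> cg m (y - x) (y' - x') ->
  (cg m x y \/ ~ (cg m x' y /\ cg m y' x)) ->
  exists k X Y X' Y', [/\ cg m X x, cg m Y y, cg m X' x', cg m Y' y' &
    [/\ Y - X = Y' - X', inwin m k X, inwin m k Y, inwin m k X' & inwin m k Y']].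
Proof.
move=> m0 /cgP [k3 h3] hb.
set M := (m:nat)%:Z.
have M0 : 0 < M by rewrite /M; lia.
have Mn : M != 0 by lia.
set u := ((x' - x) %% M)%Z.
have u0 : 0 <= u by apply: modz_ge0.
have u1 : u < M by apply: ltz_pmod.
have hu := divz_eq (x' - x) M; rewrite -/u in hu.
set q2 := ((x' - x) %/ M)%Z in hu.
case: hb => [/cgP [k1 h1] | nb].
  exists x, x, x, (x + u), (x + u); split; try (apply/cgP).
  - by exists 0%:Z; lia.
  - by exists k1; lia.
  - by exists (- q2); lia.
  - by exists (k1 + k3 - q2); lia.
  by rewrite /inwin; split; lia.
set d := ((y - x) %% M)%Z.
have d0 : 0 <= d by apply: modz_ge0.
have d1 : d < M by apply: ltz_pmod.
have hd := divz_eq (y - x) M; rewrite -/d in hd.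
set q1 := ((y - x) %/ M)%Z in hd.
have cx : cg m x x by apply/cgP; exists 0; lia.
have [hlo|hlo] := lerP (u + d) (M - 1).
  exists x, x, (x + d), (x + u), (x + u + d); split; try (apply/cgP).
  - by exists 0%:Z; lia.
  - by exists (- q1); lia.
  - by exists (- q2); lia.
  - by exists (- q2 - q1 + k3); lia.
  by rewrite /inwin; split; lia.
have [hhi|hhi] := lerP (M + 1) (u + d).
  exists (x + u + d - 2 * M), x, (x + d - M), (x + u - M), (x + u + d - 2 * M); split; try (apply/cgP).
  - by exists 0%:Z; lia.
  - by exists (- q1 - 1); lia.
  - by exists (- q2 - 1); lia.
  - by exists (- q2 - q1 + k3 - 2%:Z); lia.
  by rewrite /inwin; split; lia.
have ue : u + d = M by lia.
have [h2|h2] := lerP (2 * d) (M - 1).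
  exists (x - d), x, (x + d), (x - d), x; split; try (apply/cgP).
  - by exists 0%:Z; lia.
  - by exists (- q1); lia.
  - by exists (- q2 - 1); lia.
  - by exists (- q1 - q2 - 1 + k3); lia.
  by rewrite /inwin; split; lia.
have [h4|h4] := lerP (M + 1) (2 * d).
  exists (x - u), x, (x - u), (x + u), x; split; try (apply/cgP).
  - by exists 0%:Z; lia.
  - by exists (- q1 - 1); lia.
  - by exists (- q2); lia.
  - by exists (- q1 - q2 - 1 + k3); lia.
  by rewrite /inwin; split; lia.
exfalso; apply: nb; split; apply/cgP.
  by exists (q2 - q1); lia.
by exists (q1 + q2 + 1 - k3); lia.
Qed.

Lemma cg_sym m a b : cg m a b -> cg m b a.
Proof. by move/cgP=> [k h]; apply/cgP; exists (- k); lia. Qed.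
Lemma cg_trans m a b c : cg m a b -> cg m b c -> cg m a c.
Proof. by move=> /cgP [k h] /cgP [l h']; apply/cgP; exists (k + l); lia. Qed.

Definition cg3 n1 n2 n3 (X x : pt3) :=
  [/\ cg n1 X.1.1 x.1.1, cg n2 X.1.2 x.1.2 & cg n3 X.2 x.2].

Definition ok1 (m : nat) (x y x' y' : int) :=
  cg m (y - x) (y' - x') /\ (cg m x y \/ ~ (cg m x' y /\ cg m y' x)).

Lemma core n1 n2 n3 (A : arr3 n1 n2 n3) (x y x' y' : pt3) :
  (0 < n1)%N -> (0 < n2)%N -> (0 < n3)%N ->
  is_periodic_costas3 A ->
  (forall X, cg3 n1 n2 n3 X x -> per_ext A X) ->
  (forall X, cg3 n1 n2 n3 X y -> per_ext A X) ->
  (forall X, cg3 n1 n2 n3 X x' -> per_ext A X) ->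
  (forall X, cg3 n1 n2 n3 X y' -> per_ext A X) ->
  ok1 n1 x.1.1 y.1.1 x'.1.1 y'.1.1 ->
  ok1 n2 x.1.2 y.1.2 x'.1.2 y'.1.2 ->
  ok1 n3 x.2 y.2 x'.2 y'.2 ->
  ~ cg3 n1 n2 n3 x y ->
  ~ (cg3 n1 n2 n3 x x' /\ cg3 n1 n2 n3 y y') -> False.
Proof.
move=> h1 h2 h3 [_ hP] Dx Dy Dx' Dy' [c1 o1] [c2 o2] [c3 o3] nxy nxx.
have [k1 [X1 [Y1 [X1' [Y1' [a1 b1 c1' d1 [e1 f1 g1 i1 j1]]]]]]] := lift1 h1 c1 o1.
have [k2 [X2 [Y2 [X2' [Y2' [a2 b2 c2' d2 [e2 f2 g2 i2 j2]]]]]]] := lift1 h2 c2 o2.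
have [k3 [X3 [Y3 [X3' [Y3' [a3 b3 c3' d3 [e3 f3 g3 i3 j3]]]]]]] := lift1 h3 c3 o3.
have := hP (k1, k2, k3) (X1, X2, X3) (Y1, Y2, Y3) (X1', X2', X3') (Y1', Y2', Y3').
rewrite /in_box /=.
move: f1 g1 i1 j1 f2 g2 i2 j2 f3 g3 i3 j3; rewrite /inwin.
move=> -> -> -> -> -> -> -> -> -> -> -> -> /(_ isT isT isT isT).
move=> /(_ (Dx (X1, X2, X3) (And3 a1 a2 a3)) (Dy (Y1, Y2, Y3) (And3 b1 b2 b3))).
move=> /(_ (Dx' (X1', X2', X3') (And3 c1' c2' c3')) (Dy' (Y1', Y2', Y3') (And3 d1 d2 d3))).
have nXY : (X1, X2, X3) <> (Y1, Y2, Y3).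
  case=> E1 E2 E3; apply: nxy; split.
  - by apply: cg_trans (cg_sym a1) _; rewrite E1.
  - by apply: cg_trans (cg_sym a2) _; rewrite E2.
  - by apply: cg_trans (cg_sym a3) _; rewrite E3.
move=> /(_ nXY).
have nXY' : (X1', X2', X3') <> (Y1', Y2', Y3').
  case=> E1 E2 E3; apply: nxy; split.
  - apply: cg_trans (cg_sym a1) (cg_trans _ b1); apply/cgP; exists 0%:Z; lia.
  - apply: cg_trans (cg_sym a2) (cg_trans _ b2); apply/cgP; exists 0%:Z; lia.
  - apply: cg_trans (cg_sym a3) (cg_trans _ b3); apply/cgP; exists 0%:Z; lia.
move=> /(_ nXY').
rewrite /diff3 /= e1 e2 e3 => /(_ erefl) [E1 E2 E3 F1 F2 F3].
apply: nxx; split; split.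
- by apply: cg_trans (cg_sym a1) _; rewrite E1.
- by apply: cg_trans (cg_sym a2) _; rewrite E2.
- by apply: cg_trans (cg_sym a3) _; rewrite E3.
- by apply: cg_trans (cg_sym b1) _; rewrite F1.
- by apply: cg_trans (cg_sym b2) _; rewrite F2.
- by apply: cg_trans (cg_sym b3) _; rewrite F3.
Qed.

Lemma per_ext_dot n1 n2 n3 (A : arr3 n1 n2 n3) (P : 'I_n1 * 'I_n2 * 'I_n3) X :
  is_dot A P -> cg3 n1 n2 n3 X (emb3 P) -> per_ext A X.
Proof.
move=> hP [h1 h2 h3]; apply/existsP; exists P.
by rewrite hP andbT; apply/and3P; split; apply: cg_sym.
Qed.

Lemma ordS2 p (a : 'I_p) : (3 <= p)%N -> ordS (ordS a) != a.
Proof.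
move=> p3; apply/eqP => /(congr1 val) /=.
have ha := ltn_ord a.
have [lt|ge] := ltnP a.+1 p.
  rewrite (modn_small lt).
  have [lt2|ge2] := ltnP a.+2 p.
    by rewrite (modn_small lt2); lia.
  have e : a.+2 = p by lia.
  by rewrite e modnn; lia.
have e : a.+1 = p by lia.
by rewrite e modnn modn_small; lia.
Qed.

Lemma ordS_neq p (a : 'I_p) : (2 <= p)%N -> ordS a != a.
Proof.
move=> p2; apply/eqP => /(congr1 val) /=.
have ha := ltn_ord a.
have [lt|ge] := ltnP a.+1 p.
  by rewrite (modn_small lt); lia.
have e : a.+1 = p by lia.
by rewrite e modnn; lia.
Qed.

Definition esucc p q (c : 'I_p * 'I_q) := (ordS c.1, c.2).

Lemma grid p q N (f : 'I_p * 'I_q -> 'I_N) : (3 <= p)%N -> (0 < N)%N -> (N <= p * q)%N ->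
  injective f ->
  exists c c' : 'I_p * 'I_q, [/\ c != c',
    cg N ((f (esucc c) : nat)%:Z - (f c : nat)%:Z) ((f (esucc c') : nat)%:Z - (f c' : nat)%:Z) &
    ~ (f c' = f (esucc c) /\ f (esucc c') = f c)].
Proof.
move=> p3 N0 Npq finj.
pose v c := ((f (esucc c) : nat) + N - f c)%N.
pose g c := Ordinal (ltn_pmod (v c) N0).
have gnz c : g c != Ordinal N0.
  apply/eqP => /(congr1 val) /=; rewrite /v.
  have h1 := ltn_ord (f c); have h2 := ltn_ord (f (esucc c)).
  have [lt|ge] := ltnP (f (esucc c) + N - f c)%N N.
    rewrite modn_small // => E.
    have E' : f (esucc c) = f c by apply: ord_inj; lia.
    move/finj: E'; case: c {E h1 h2 lt} => a b /= [] /eqP.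
    by rewrite (negbTE (ordS_neq a _)) //; lia.
  have e : (f (esucc c) + N - f c = (f (esucc c) - f c) + N)%N by lia.
  rewrite e modnDr modn_small; last by lia.
  move=> E.
    have E' : f (esucc c) = f c by apply: ord_inj; lia.
  move/finj: E'; case: c {E h1 h2 ge e} => a b /= [] /eqP.
  by rewrite (negbTE (ordS_neq a _)) //; lia.
case: (boolP [exists c, exists c', (c != c') && (g c == g c')]); last first.
  move/existsPn => H.
  have ginj : injective g.
    move=> a b E; apply/eqP; apply: contraT => nab.
    by have := existsPn (H a) b; rewrite nab E eqxx.
  have hc : (#|'I_N| <= #|{: 'I_p * 'I_q}|)%N by rewrite card_prod !card_ord.
  have := inj_card_onto ginj hc (Ordinal N0).
  by case/codomP => c E; have := gnz c; rewrite -E eqxx.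
case/existsP => c /existsP [c' /andP [nc /eqP E]].
exists c, c'; split => //.
  have /(congr1 val) /= E2 := E.
  have h1 := ltn_ord (f c); have h2 := ltn_ord (f (esucc c)).
  have h1' := ltn_ord (f c'); have h2' := ltn_ord (f (esucc c')).
  have d1 := divn_eq (v c) N; have d2 := divn_eq (v c') N.
  rewrite E2 in d1.
  move: d1 d2; rewrite /v.
  move: (_ %/ N)%N (_ %/ N)%N (_ %% N)%N => a b r d1 d2.
  apply/cgP; exists (b%:Z - a%:Z); lia.
move=> [/finj E1 /finj E2].
have E3 : esucc (esucc c) = c by rewrite -E1 E2.
have := ordS2 c.1 p3; move/(congr1 fst): E3 => /= ->.
by rewrite eqxx.
Qed.

Lemma cg_ord m (a b : 'I_m) : cg m (a : nat)%:Z (b : nat)%:Z -> a = b.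
Proof.
rewrite /cg /= !modz_small; first by move/eqP => [] /ord_inj.
- by have := ltn_ord b; lia.
- by have := ltn_ord a; lia.
Qed.

Lemma cg_ordS p (a : 'I_p) : cg p (ordS a : nat)%:Z ((a : nat)%:Z + 1).
Proof.
apply/cgP; rewrite /=.
have ha := ltn_ord a.
have [lt|ge] := ltnP a.+1 p.
  by rewrite (modn_small lt); exists 0%:Z; lia.
have e : a.+1 = p by lia.
by rewrite e modnn; exists (- 1%:Z); lia.
Qed.

Lemma ok1_move p (a a' : 'I_p) : (3 <= p)%N ->
  ok1 p (a : nat)%:Z (ordS a : nat)%:Z (a' : nat)%:Z (ordS a' : nat)%:Z.
Proof.
move=> p3; split.
  move: (cg_ordS a) (cg_ordS a') => /cgP [k h] /cgP [l h'].
  by apply/cgP; exists (k - l); lia.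
right=> [[/cg_ord E1 /cg_ord E2]].
by have := ordS2 a p3; rewrite -E1 E2 eqxx.
Qed.

Lemma ok1_static q (b b' : 'I_q) :
  ok1 q (b : nat)%:Z (b : nat)%:Z (b' : nat)%:Z (b' : nat)%:Z.
Proof. by split; [apply/cgP; exists 0%:Z; lia | left; apply/cgP; exists 0%:Z; lia]. Qed.

Lemma ok1_line N (u v u' v' : 'I_N) :
  cg N ((v : nat)%:Z - (u : nat)%:Z) ((v' : nat)%:Z - (u' : nat)%:Z) ->
  ~ (u' = v /\ v' = u) ->
  ok1 N (u : nat)%:Z (v : nat)%:Z (u' : nat)%:Z (v' : nat)%:Z.
Proof. by move=> h nb; split => //; right => [[/cg_ord E1 /cg_ord E2]]; apply: nb. Qed.

Lemma ncg_move p (a : 'I_p) : (2 <= p)%N -> ~ cg p (a : nat)%:Z (ordS a : nat)%:Z.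
Proof. by move=> p2 /cg_ord E; have := ordS_neq a p2; rewrite -E eqxx. Qed.

Lemma pair_eq p q (c c' : 'I_p * 'I_q) : cg p (c.1 : nat)%:Z (c'.1 : nat)%:Z ->
  cg q (c.2 : nat)%:Z (c'.2 : nat)%:Z -> c = c'.
Proof. by case: c c' => a b [a' b'] /cg_ord /= -> /cg_ord /= ->. Qed.

Lemma inst1 n1 n2 n3 (A : arr3 n1 n2 n3) (phi : 'I_n1 * 'I_n2 -> 'I_n3) :
  (3 <= n1)%N -> (0 < n2)%N -> (0 < n3)%N -> (n3 <= n1 * n2)%N -> injective phi ->
  (forall a1 a2 a3, A a1 a2 a3 = (phi (a1, a2) == a3)) ->
  is_periodic_costas3 A -> False.
Proof.
move=> p3 q0 N0 hN inj hA hper.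
have [c [c' [nc hcg hnb]]] := grid p3 N0 hN inj.
pose P (d : 'I_n1 * 'I_n2) : 'I_n1 * 'I_n2 * 'I_n3 := (d.1, d.2, phi d).
have dotP d : is_dot A (P d) by rewrite /is_dot hA; case: d => a b /=.
have n10 : (0 < n1)%N by lia.
apply: (@core _ _ _ A (emb3 (P c)) (emb3 (P (esucc c))) (emb3 (P c')) (emb3 (P (esucc c'))) n10 q0 N0 hper).
- by move=> X; apply: per_ext_dot (dotP _).
- by move=> X; apply: per_ext_dot (dotP _).
- by move=> X; apply: per_ext_dot (dotP _).
- by move=> X; apply: per_ext_dot (dotP _).
- exact: ok1_move.
- exact: ok1_static.
- exact: ok1_line.
- by case=> h _ _; apply: (ncg_move (p:=n1) (a:=c.1)) h; lia.
- by case=> [[h1 h2 _] _]; move/negP: nc; apply; apply/eqP; apply: pair_eq.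
Qed.

Lemma inst2 n1 n2 n3 (A : arr3 n1 n2 n3) (f : 'I_n2 * 'I_n1 -> 'I_n3) :
  (3 <= n2)%N -> (0 < n1)%N -> (0 < n3)%N -> (n3 <= n2 * n1)%N -> injective f ->
  (forall d, is_dot A (d.2, d.1, f d)) ->
  is_periodic_costas3 A -> False.
Proof.
move=> p3 q0 N0 hN inj dotP hper.
have [c [c' [nc hcg hnb]]] := grid p3 N0 hN inj.
have n20 : (0 < n2)%N by lia.
apply: (@core _ _ _ A (emb3 (c.2, c.1, f c)) (emb3 ((esucc c).2, (esucc c).1, f (esucc c)))
   (emb3 (c'.2, c'.1, f c')) (emb3 ((esucc c').2, (esucc c').1, f (esucc c'))) q0 n20 N0 hper).
- by move=> X; apply: per_ext_dot (dotP _).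
- by move=> X; apply: per_ext_dot (dotP _).
- by move=> X; apply: per_ext_dot (dotP _).
- by move=> X; apply: per_ext_dot (dotP _).
- exact: ok1_static.
- exact: ok1_move.
- exact: ok1_line.
- by case=> _ h _; apply: (ncg_move (p:=n2) (a:=c.1)) h; lia.
- by case=> [[h2 h1 _] _]; move/negP: nc; apply; apply/eqP; apply: pair_eq.
Qed.

Lemma inst3 n1 n2 n3 (A : arr3 n1 n2 n3) (f : 'I_n2 * 'I_n3 -> 'I_n1) :
  (3 <= n2)%N -> (0 < n3)%N -> (0 < n1)%N -> (n1 <= n2 * n3)%N -> injective f ->
  (forall d, is_dot A (f d, d.1, d.2)) ->
  is_periodic_costas3 A -> False.
Proof.
move=> p3 q0 N0 hN inj dotP hper.
have [c [c' [nc hcg hnb]]] := grid p3 N0 hN inj.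
have n20 : (0 < n2)%N by lia.
apply: (@core _ _ _ A (emb3 (f c, c.1, c.2)) (emb3 (f (esucc c), (esucc c).1, (esucc c).2))
   (emb3 (f c', c'.1, c'.2)) (emb3 (f (esucc c'), (esucc c').1, (esucc c').2)) N0 n20 q0 hper).
- by move=> X; apply: per_ext_dot (dotP _).
- by move=> X; apply: per_ext_dot (dotP _).
- by move=> X; apply: per_ext_dot (dotP _).
- by move=> X; apply: per_ext_dot (dotP _).
- exact: ok1_line.
- exact: ok1_move.
- exact: ok1_static.
- by case=> _ h _; apply: (ncg_move (p:=n2) (a:=c.1)) h; lia.
- by case=> [[_ h1 h2] _]; move/negP: nc; apply; apply/eqP; apply: pair_eq.
Qed.

Lemma inst4 n1 n2 n3 (A : arr3 n1 n2 n3) (f : 'I_n3 * 'I_n2 -> 'I_n1) :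
  (3 <= n3)%N -> (0 < n2)%N -> (0 < n1)%N -> (n1 <= n3 * n2)%N -> injective f ->
  (forall d, is_dot A (f d, d.2, d.1)) ->
  is_periodic_costas3 A -> False.
Proof.
move=> p3 q0 N0 hN inj dotP hper.
have [c [c' [nc hcg hnb]]] := grid p3 N0 hN inj.
have n30 : (0 < n3)%N by lia.
apply: (@core _ _ _ A (emb3 (f c, c.2, c.1)) (emb3 (f (esucc c), (esucc c).2, (esucc c).1))
   (emb3 (f c', c'.2, c'.1)) (emb3 (f (esucc c'), (esucc c').2, (esucc c').1)) N0 q0 n30 hper).
- by move=> X; apply: per_ext_dot (dotP _).
- by move=> X; apply: per_ext_dot (dotP _).
- by move=> X; apply: per_ext_dot (dotP _).
- by move=> X; apply: per_ext_dot (dotP _).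
- exact: ok1_line.
- exact: ok1_static.
- exact: ok1_move.
- by case=> _ _ h; apply: (ncg_move (p:=n3) (a:=c.1)) h; lia.
- by case=> [[_ h2 h1] _]; move/negP: nc; apply; apply/eqP; apply: pair_eq.
Qed.

Theorem mainTheorem12 (n1 n2 n3 : nat) (A : arr3 n1 n2 n3) :
  (2 <= n1)%N -> (2 <= n2)%N -> (2 <= n3)%N ->
  is_periodic_costas3 A -> order3 A = 4%N.
Proof.
move=> h1 h2 h3 hper.
have [[hperm _] _] := hper.
case: hperm => [[phi [bphi hA]] | [phi [bphi hA]]].
- have hc : (n1 * n2 = n3)%N.
    by have := bij_eq_card bphi; rewrite card_prod !card_ord.
  have inj := bij_inj bphi.
  have l1 : (n1 <= 2)%N.
    rewrite leqNgt; apply/negP => g; apply: (inst1 g _ _ _ inj hA hper); lia.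
  have l2 : (n2 <= 2)%N.
    rewrite leqNgt; apply/negP => g.
    apply: (@inst2 _ _ _ A (fun d => phi (d.2, d.1)) g); try lia.
    + by case=> a b [a' b'] /inj /= [-> ->].
    + by case=> a b; rewrite /is_dot hA.
    + exact: hper.
  have -> : order3 A = (n1 * n2)%N.
    rewrite /order3.
    have -> : [set p | is_dot A p] = [set (d.1, d.2, phi d) | d : 'I_n1 * 'I_n2].
      apply/setP => [[[a b] z]]; rewrite !inE /is_dot hA /=.
      apply/eqP/imsetP => [<-|[d _ [-> -> ->]]]; first by exists (a, b).
      by case: d.
    rewrite card_imset; first by rewrite card_prod !card_ord.
    by case=> a b [a' b'] [-> ->].
  have e1 : n1 = 2 by lia.
  have e2 : n2 = 2 by lia.
  by rewrite e1 e2.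
- have hc : (n1 = n2 * n3)%N.
    by have := bij_eq_card bphi; rewrite card_prod !card_ord.
  case: (bphi) => psi K1 K2.
  have l2 : (n2 <= 2)%N.
    rewrite leqNgt; apply/negP => g.
    apply: (@inst3 _ _ _ A psi g); try lia.
    + exact: can_inj K2.
    + by case=> a b; rewrite /is_dot hA /= K2.
    + exact: hper.
  have l3 : (n3 <= 2)%N.
    rewrite leqNgt; apply/negP => g.
    apply: (@inst4 _ _ _ A (fun d => psi (d.2, d.1)) g); try lia.
    + by case=> a b [a' b'] /(can_inj K2) /= [-> ->].
    + by case=> a b; rewrite /is_dot hA /= K2.
    + exact: hper.
  have -> : order3 A = n1.
    rewrite /order3.
    have -> : [set p | is_dot A p] = [set (a, (phi a).1, (phi a).2) | a : 'I_n1].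
      apply/setP => [[[a b] z]]; rewrite !inE /is_dot hA /=.
      apply/eqP/imsetP => [E|[d _ [-> -> ->]]]; first by exists a => //; rewrite E.
      by case: (phi d).
    by rewrite card_imset ?card_ord // => a a' [].
  have e2 : n2 = 2 by lia.
  have e3 : n3 = 2 by lia.
  by rewrite hc e2 e3.
Qed.
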